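(* Let $\beta_1<\beta_2<\alpha_1<\alpha_2$ and $C_{\alpha_1},C_{\beta_2}>0$, $C_{\alpha_2},C_{\beta_1}<0$. The labeled orthotoric quadrilateral with normals $u_{\alpha_i}=C_{\alpha_i}(\alpha_i,-1)$, $u_{\beta_i}=C_{\beta_i}(\beta_i,-1)$ is a rational labeled polytope (i.e. its four normals lie in a common lattice of $\mathbb R^2$) if and only if (1) $\mathbf r=\frac{(\beta_2-\alpha_1)(\alpha_2-\beta_1)}{(\beta_2-\beta_1)(\alpha_2-\alpha_1)}\in\mathbb Q$, and (2) there exist positive rational numbers $p_{\beta_1},p_{\alpha_2},p_{\alpha_1}$ with $p_{\beta_1}C_{\beta_1}=\frac{\beta_2-\alpha_1}{\alpha_1-\beta_1}C_{\beta_2}$, $p_{\alpha_2}C_{\alpha_2}=-\frac{\beta_2-\beta_1}{\alpha_2-\beta_1}C_{\beta_2}$ and $p_{\alpha_1}C_{\alpha_1}=\frac{\beta_2-\beta_1}{\alpha_1-\beta_1}C_{\beta_2}$. In particular the underlying polytope $\sigma([\alpha_1,\alpha_2]\times[\beta_1,\beta_2])$ ($\sigma(x,y)=(x+y,xy)$) is of rational type iff $\mathbf r\in\mathbb Q$.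
   Context: A polytope is of rational type if there is a lattice containing a normal vector to each facet. *)

(* Defs.v *)
From Stdlib Require Import Reals QArith Qreals ZArith List.
Import ListNotations.
Open Scope R_scope.

Definition vec2 := (R * R)%type.

Definition is_rational (x : R) : Prop := exists q : Q, x = Q2R q.

(* (e1, e2) is a basis of R^2, so Z e1 + Z e2 is a lattice of R^2
   (every lattice of R^2 is of this form). *)
Definition is_basis (e1 e2 : vec2) : Prop :=
  fst e1 * snd e2 - snd e1 * fst e2 <> 0.

Definition in_lattice (e1 e2 v : vec2) : Prop :=
  exists a b : Z,
    fst v = IZR a * fst e1 + IZR b * fst e2 /\
    snd v = IZR a * snd e1 + IZR b * snd e2.

Definition in_common_lattice (vs : list vec2) : Prop :=
  exists e1 e2 : vec2, is_basis e1 e2 /\ Forall (in_lattice e1 e2) vs.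

Definition ortho_normal (C a : R) : vec2 := (C * a, - C).

Definition rational_labeled (a1 a2 b1 b2 Ca1 Ca2 Cb1 Cb2 : R) : Prop :=
  in_common_lattice
    [ortho_normal Ca1 a1; ortho_normal Ca2 a2;
     ortho_normal Cb1 b1; ortho_normal Cb2 b2].

(* The facets of this
   quadrilateral have normal directions (a_i,-1), (b_i,-1), so the normal
   vectors to the facets are exactly the nonzero multiples c (a_i,-1),
   c (b_i,-1). *)
Definition rational_type (a1 a2 b1 b2 : R) : Prop :=
  exists c1 c2 c3 c4 : R,
    c1 <> 0 /\ c2 <> 0 /\ c3 <> 0 /\ c4 <> 0 /\
    in_common_lattice
      [ortho_normal c1 a1; ortho_normal c2 a2;
       ortho_normal c3 b1; ortho_normal c4 b2].

Definition r_ratio (a1 a2 b1 b2 : R) : R :=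
  ((b2 - a1) * (a2 - b1)) / ((b2 - b1) * (a2 - a1)).

(* Main.v *)
Require Import Defs.
From Stdlib Require Import Reals QArith Qreals ZArith List Lra Lia.
Import ListNotations.
Open Scope R_scope.

Lemma rat_IZR k : is_rational (IZR k).
Proof. exists (inject_Z k). unfold Q2R; simpl. field. Qed.

Lemma rat_plus x y : is_rational x -> is_rational y -> is_rational (x + y).
Proof. intros [a ->] [b ->]. exists (a + b)%Q. now rewrite Q2R_plus. Qed.

Lemma rat_mult x y : is_rational x -> is_rational y -> is_rational (x * y).
Proof. intros [a ->] [b ->]. exists (a * b)%Q. now rewrite Q2R_mult. Qed.

Lemma rat_opp x : is_rational x -> is_rational (- x).
Proof. intros [a ->]. exists (- a)%Q. now rewrite Q2R_opp. Qed.

Lemma rat_inv x : is_rational x -> x <> 0 -> is_rational (/ x).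
Proof. intros [a ->] H. exists (/ a)%Q. rewrite Q2R_inv; auto.
  intro E. apply H. rewrite (Qeq_eqR _ _ E). unfold Q2R; simpl; field. Qed.

Lemma rat_minus x y : is_rational x -> is_rational y -> is_rational (x - y).
Proof. intros. unfold Rminus. apply rat_plus; auto. now apply rat_opp. Qed.

Lemma rat_div x y : is_rational x -> is_rational y -> y <> 0 -> is_rational (x / y).
Proof. intros. unfold Rdiv. apply rat_mult; auto. now apply rat_inv. Qed.

Lemma rat_den x : is_rational x -> exists n d : Z, IZR d <> 0 /\ x * IZR d = IZR n.
Proof. intros [q ->]. exists (Qnum q), (Zpos (Qden q)).
  assert (IZR (Zpos (Qden q)) <> 0) by (apply not_0_IZR; discriminate).
  split; auto. unfold Q2R. field; auto. Qed.

Definition det (p q : vec2) : R := fst p * snd q - snd p * fst q.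

Lemma det_lattice e1 e2 p q : in_lattice e1 e2 p -> in_lattice e1 e2 q ->
  exists k : Z, det p q = IZR k * det e1 e2.
Proof.
  intros [a [b [H1 H2]]] [c [d [H3 H4]]].
  exists (a * d - b * c)%Z. unfold det. rewrite H1, H2, H3, H4.
  rewrite minus_IZR, !mult_IZR. ring.
Qed.

Lemma det_ratio_rat e1 e2 p q p' q' :
  in_lattice e1 e2 p -> in_lattice e1 e2 q ->
  in_lattice e1 e2 p' -> in_lattice e1 e2 q' -> det p' q' <> 0 ->
  is_rational (det p q / det p' q').
Proof.
  intros Hp Hq Hp' Hq' Hn.
  destruct (det_lattice _ _ _ _ Hp Hq) as [k Hk].
  destruct (det_lattice _ _ _ _ Hp' Hq') as [k' Hk'].
  rewrite Hk' in Hn.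
  assert (IZR k' <> 0) by (intro E; apply Hn; rewrite E; ring).
  assert (det e1 e2 <> 0) by (intro E; apply Hn; rewrite E; ring).
  replace (det p q / det p' q') with (IZR k / IZR k').
  - apply rat_div; auto; apply rat_IZR.
  - rewrite Hk, Hk'. field; auto.
Qed.

Lemma lattice_of_rats (u v p q : vec2) x y z w :
  det u v <> 0 -> is_rational x -> is_rational y -> is_rational z -> is_rational w ->
  fst p = x * fst u + y * fst v -> snd p = x * snd u + y * snd v ->
  fst q = z * fst u + w * fst v -> snd q = z * snd u + w * snd v ->
  in_common_lattice [v; p; q; u].
Proof.
  destruct u as [u1 u2], v as [v1 v2], p as [p1 p2], q as [q1 q2]; simpl.
  unfold det; simpl.
  intros Hd Hx Hy Hz Hw E1 E2 E3 E4.
  destruct (rat_den _ Hx) as [nx [dx [Dx Nx]]].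
  destruct (rat_den _ Hy) as [ny [dy [Dy Ny]]].
  destruct (rat_den _ Hz) as [nz [dz [Dz Nz]]].
  destruct (rat_den _ Hw) as [nw [dw [Dw Nw]]].
  set (N := IZR dx * IZR dy * IZR dz * IZR dw).
  assert (HN : N <> 0) by (unfold N; repeat apply Rmult_integral_contrapositive_currified; auto).
  exists (u1 / N, u2 / N), (v1 / N, v2 / N). split.
  { unfold is_basis; simpl. intro E. apply Hd.
    replace (u1 * v2 - u2 * v1) with ((u1 / N * (v2 / N) - u2 / N * (v1 / N)) * (N * N)) by (field; auto).
    rewrite E; ring. }
  assert (EN : N = IZR (dx * dy * dz * dw)) by (unfold N; rewrite !mult_IZR; ring).
  repeat constructor; simpl.
  - exists 0%Z, (dx * dy * dz * dw)%Z. rewrite <- EN; simpl; split; field; auto.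
  - exists (nx * dy * dz * dw)%Z, (ny * dx * dz * dw)%Z. rewrite !mult_IZR, <- Nx, <- Ny.
    rewrite E1, E2; unfold N; simpl; split; field; auto.
  - exists (nz * dx * dy * dw)%Z, (nw * dx * dy * dz)%Z. rewrite !mult_IZR, <- Nz, <- Nw.
    rewrite E3, E4; unfold N; simpl; split; field; auto.
  - exists (dx * dy * dz * dw)%Z, 0%Z; rewrite <- EN; simpl; split; field; auto.
Qed.

Lemma det_on C t D s : det (ortho_normal C t) (ortho_normal D s) = C * D * (s - t).
Proof. unfold det, ortho_normal; simpl; ring. Qed.

Ltac nz := unfold Rdiv; repeat (apply Rmult_integral_contrapositive_currified || apply Rinv_neq_0_compat); auto.

Lemma part1 (a1 a2 b1 b2 Ca1 Ca2 Cb1 Cb2 : R) :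
  b1 < b2 -> b2 < a1 -> a1 < a2 ->
  0 < Ca1 -> 0 < Cb2 -> Ca2 < 0 -> Cb1 < 0 ->
  (rational_labeled a1 a2 b1 b2 Ca1 Ca2 Cb1 Cb2 <->
     (is_rational (r_ratio a1 a2 b1 b2) /\
      exists pb1 pa2 pa1 : R,
        0 < pb1 /\ is_rational pb1 /\
        0 < pa2 /\ is_rational pa2 /\
        0 < pa1 /\ is_rational pa1 /\
        pb1 * Cb1 = (b2 - a1) / (a1 - b1) * Cb2 /\
        pa2 * Ca2 = - ((b2 - b1) / (a2 - b1)) * Cb2 /\
        pa1 * Ca1 = (b2 - b1) / (a1 - b1) * Cb2)).
Proof.
  intros H1 H2 H3 K1 K2 K3 K4.
  assert (n1 : Ca1 <> 0) by lra. assert (n2 : Ca2 <> 0) by lra.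
  assert (n3 : Cb1 <> 0) by lra. assert (n4 : Cb2 <> 0) by lra.
  assert (d1 : a1 - b2 <> 0) by lra. assert (d2 : a1 - a2 <> 0) by lra.
  assert (d3 : a2 - b2 <> 0) by lra. assert (d4 : a1 - b1 <> 0) by lra.
  assert (d5 : b1 - b2 <> 0) by lra. assert (d6 : b2 - a1 <> 0) by lra.
  assert (d7 : a2 - a1 <> 0) by lra. assert (d8 : a2 - b1 <> 0) by lra.
  assert (d9 : b2 - b1 <> 0) by lra.
  set (X := Ca2 * Ca1 * (a1 - a2) / (Cb2 * Ca1 * (a1 - b2))).
  set (Y := Cb2 * Ca2 * (a2 - b2) / (Cb2 * Ca1 * (a1 - b2))).
  set (Z := Cb1 * Ca1 * (a1 - b1) / (Cb2 * Ca1 * (a1 - b2))).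
  set (W := Cb2 * Cb1 * (b1 - b2) / (Cb2 * Ca1 * (a1 - b2))).
  assert (Er : r_ratio a1 a2 b1 b2 = 1 - Y * Z / (X * W)).
  { unfold r_ratio, X, Y, Z, W. field; repeat split; auto. }
  assert (nX : X <> 0) by (unfold X; nz). assert (nZ : Z <> 0) by (unfold Z; nz).
  assert (nW : W <> 0) by (unfold W; nz).
  assert (nr : r_ratio a1 a2 b1 b2 <> 0) by (unfold r_ratio; nz).
  split.
  - intros [e1 [e2 [Hb Hf]]].
    inversion Hf as [|? ? La1 Hf1]; subst.
    inversion Hf1 as [|? ? La2 Hf2]; subst.
    inversion Hf2 as [|? ? Lb1 Hf3]; subst.
    inversion Hf3 as [|? ? Lb2 Hf4]; subst.
    assert (Hden : det (ortho_normal Cb2 b2) (ortho_normal Ca1 a1) <> 0)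
      by (rewrite det_on; nz).
    assert (HX := det_ratio_rat _ _ _ _ _ _ La2 La1 Lb2 La1 Hden).
    assert (HY := det_ratio_rat _ _ _ _ _ _ Lb2 La2 Lb2 La1 Hden).
    assert (HZ := det_ratio_rat _ _ _ _ _ _ Lb1 La1 Lb2 La1 Hden).
    assert (HW := det_ratio_rat _ _ _ _ _ _ Lb2 Lb1 Lb2 La1 Hden).
    rewrite !det_on in HX, HY, HZ, HW. fold X in HX. fold Y in HY. fold Z in HZ. fold W in HW.
    assert (Hr : is_rational (r_ratio a1 a2 b1 b2)).
    { rewrite Er. apply rat_minus. apply rat_IZR. apply rat_div.
      apply rat_mult; auto. apply rat_mult; auto. nz. }
    split; auto.
    exists ((a1 - b2) * Cb2 / ((a1 - b1) * - Cb1)),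
           ((b2 - b1) * Cb2 / ((a2 - b1) * - Ca2)),
           ((b2 - b1) * Cb2 / ((a1 - b1) * Ca1)).
    repeat split.
    + apply Rdiv_lt_0_compat; apply Rmult_lt_0_compat; lra.
    + replace ((a1 - b2) * Cb2 / ((a1 - b1) * - Cb1)) with (- / Z).
      apply rat_opp, rat_inv; auto. unfold Z; field; repeat split; auto.
    + apply Rdiv_lt_0_compat; apply Rmult_lt_0_compat; lra.
    + replace ((b2 - b1) * Cb2 / ((a2 - b1) * - Ca2)) with (- / (X * r_ratio a1 a2 b1 b2)).
      apply rat_opp, rat_inv. apply rat_mult; auto. nz.
      unfold X, r_ratio; field; repeat split; auto.
    + apply Rdiv_lt_0_compat; apply Rmult_lt_0_compat; lra.
    + replace ((b2 - b1) * Cb2 / ((a1 - b1) * Ca1)) with (- (W / Z)).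
      apply rat_opp, rat_div; auto. unfold W, Z; field; repeat split; auto.
    + field; auto.
    + field; auto.
    + field; auto.
  - intros [Hr [pb1 [pa2 [pa1 [P1 [R1 [P2 [R2 [P3 [R3 [E1 [E2 E3]]]]]]]]]]]].
    assert (F1 : Cb1 = (b2 - a1) / (a1 - b1) * Cb2 / pb1).
    { rewrite <- E1. field. lra. }
    assert (F2 : Ca2 = - ((b2 - b1) / (a2 - b1)) * Cb2 / pa2).
    { rewrite <- E2. field. lra. }
    assert (F3 : Ca1 = (b2 - b1) / (a1 - b1) * Cb2 / pa1).
    { rewrite <- E3. field. lra. }
    assert (q1 : pb1 <> 0) by lra. assert (q2 : pa2 <> 0) by lra. assert (q3 : pa1 <> 0) by lra.
    assert (HZ : is_rational Z).
    { replace Z with (- / pb1). apply rat_opp, rat_inv; auto.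
      unfold Z. rewrite F1. field; repeat split; auto. }
    assert (HW : is_rational W).
    { replace W with (pa1 / pb1). apply rat_div; auto.
      unfold W. rewrite F1, F3. field; repeat split; auto. }
    assert (HX : is_rational X).
    { replace X with (- / (r_ratio a1 a2 b1 b2 * pa2)). apply rat_opp, rat_inv; auto.
      apply rat_mult; auto. nz.
      unfold X, r_ratio. rewrite F2. field; repeat split; auto. }
    assert (HY : is_rational Y).
    { replace Y with (X * (r_ratio a1 a2 b1 b2 - 1) * pa1).
      apply rat_mult; auto. apply rat_mult; auto. apply rat_minus; auto. apply rat_IZR.
      unfold X, Y, r_ratio. rewrite F3. field; repeat split; auto. }
    unfold rational_labeled.
    apply (lattice_of_rats _ _ _ _ X Y Z W).
    + rewrite det_on; nz.
    + auto. + auto. + auto. + auto.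
    + unfold X, Y, ortho_normal; simpl; field; repeat split; auto.
    + unfold X, Y, ortho_normal; simpl; field; repeat split; auto.
    + unfold Z, W, ortho_normal; simpl; field; repeat split; auto.
    + unfold Z, W, ortho_normal; simpl; field; repeat split; auto.
Qed.

Theorem mainTheorem14 (a1 a2 b1 b2 Ca1 Ca2 Cb1 Cb2 : R) :
  b1 < b2 -> b2 < a1 -> a1 < a2 ->
  0 < Ca1 -> 0 < Cb2 -> Ca2 < 0 -> Cb1 < 0 ->
  (rational_labeled a1 a2 b1 b2 Ca1 Ca2 Cb1 Cb2 <->
     (is_rational (r_ratio a1 a2 b1 b2) /\
      exists pb1 pa2 pa1 : R,
        0 < pb1 /\ is_rational pb1 /\
        0 < pa2 /\ is_rational pa2 /\
        0 < pa1 /\ is_rational pa1 /\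
        pb1 * Cb1 = (b2 - a1) / (a1 - b1) * Cb2 /\
        pa2 * Ca2 = - ((b2 - b1) / (a2 - b1)) * Cb2 /\
        pa1 * Ca1 = (b2 - b1) / (a1 - b1) * Cb2))
  /\
  (rational_type a1 a2 b1 b2 <-> is_rational (r_ratio a1 a2 b1 b2)).
Proof.
  intros H1 H2 H3 K1 K2 K3 K4.
  split; [apply part1; auto|].
  assert (d1 : a1 - b2 <> 0) by lra. assert (d2 : a1 - a2 <> 0) by lra.
  assert (d3 : a2 - b2 <> 0) by lra. assert (d4 : a1 - b1 <> 0) by lra.
  assert (d5 : b1 - b2 <> 0) by lra. assert (d6 : b2 - a1 <> 0) by lra.
  assert (d7 : a2 - a1 <> 0) by lra. assert (d8 : a2 - b1 <> 0) by lra.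
  assert (d9 : b2 - b1 <> 0) by lra.
  split.
  - intros [Ca1' [Ca2' [Cb1' [Cb2' [n1 [n2 [n3 [n4 [e1 [e2 [Hb Hf]]]]]]]]]]].
    inversion Hf as [|? ? La1 Hf1]; subst.
    inversion Hf1 as [|? ? La2 Hf2]; subst.
    inversion Hf2 as [|? ? Lb1 Hf3]; subst.
    inversion Hf3 as [|? ? Lb2 Hf4]; subst.
    assert (Hden : det (ortho_normal Cb2' b2) (ortho_normal Ca1' a1) <> 0)
      by (rewrite det_on; nz).
    assert (HX := det_ratio_rat _ _ _ _ _ _ La2 La1 Lb2 La1 Hden).
    assert (HY := det_ratio_rat _ _ _ _ _ _ Lb2 La2 Lb2 La1 Hden).
    assert (HZ := det_ratio_rat _ _ _ _ _ _ Lb1 La1 Lb2 La1 Hden).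
    assert (HW := det_ratio_rat _ _ _ _ _ _ Lb2 Lb1 Lb2 La1 Hden).
    rewrite !det_on in HX, HY, HZ, HW.
    set (X := Ca2' * Ca1' * (a1 - a2) / (Cb2' * Ca1' * (a1 - b2))) in *.
    set (Y := Cb2' * Ca2' * (a2 - b2) / (Cb2' * Ca1' * (a1 - b2))) in *.
    set (Z := Cb1' * Ca1' * (a1 - b1) / (Cb2' * Ca1' * (a1 - b2))) in *.
    set (W := Cb2' * Cb1' * (b1 - b2) / (Cb2' * Ca1' * (a1 - b2))) in *.
    assert (Er : r_ratio a1 a2 b1 b2 = 1 - Y * Z / (X * W)).
    { unfold r_ratio, X, Y, Z, W. field; repeat split; auto. }
    rewrite Er. apply rat_minus. apply rat_IZR. apply rat_div.
    apply rat_mult; auto. apply rat_mult; auto. unfold X, W; nz.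
  - intros Hr.
    exists ((b2 - b1) / (a1 - b1)), (- ((b2 - b1) / (a2 - b1))), ((b2 - a1) / (a1 - b1)), 1.
    assert (P1 : 0 < (b2 - b1) / (a1 - b1)) by (apply Rdiv_lt_0_compat; lra).
    assert (P2 : 0 < (b2 - b1) / (a2 - b1)) by (apply Rdiv_lt_0_compat; lra).
    assert (P3 : 0 < (a1 - b2) / (a1 - b1)) by (apply Rdiv_lt_0_compat; lra).
    assert (E3 : (b2 - a1) / (a1 - b1) = - ((a1 - b2) / (a1 - b1))) by (field; auto).
    repeat split; try lra.
    apply part1; try lra.
    split; auto.
    exists 1, 1, 1. repeat split; try lra; try apply rat_IZR.
Qed.
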